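(* Let $\kappa$ be a regular cardinal. There is a $(\kappa,\kappa^+)$-Borel set (a subset of $\kappa^\kappa$) which is not $\kappa$-Borel.
   Context: For $X\subseteq\kappa$ with $|X|<\kappa$ and $\eta:X\to\kappa$, let $N_\eta=\{\zeta\in\kappa^\kappa\mid\eta\subseteq\zeta\}$; these sets and $\emptyset$ are the basic $\kappa$-open sets. For a cardinal $\lambda$, the $(\kappa,\lambda)$-Borel sets form the smallest class containing the basic $\kappa$-open sets and closed under complements, unions of at most $\lambda$ sets and intersections of at most $\lambda$ sets; $\kappa$-Borel means $(\kappa,\kappa)$-Borel. *)

(* Defs.v *)
(* Cardinals are modelled as well-ordered types. *)
Set Implicit Arguments.

Definition inj_le (A B : Type) : Prop :=
  exists f : A -> B, forall x y, f x = f y -> x = y.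

Record strict_wellorder (T : Type) (R : T -> T -> Prop) : Prop := {
  swo_wf : well_founded R;
  swo_irrefl : forall x, ~ R x x;
  swo_trans : forall x y z, R x y -> R y z -> R x z;
  swo_total : forall x y, R x y \/ x = y \/ R y x }.

(* (K, lt) is (the von Neumann ordinal of) a regular cardinal kappa:
   an infinite initial ordinal whose cofinal subsets all have size kappa. *)
Record regular_cardinal (K : Type) (lt : K -> K -> Prop) : Prop := {
  rc_wo : strict_wellorder lt;
  rc_infinite : inj_le nat K;
  rc_initial : forall a : K, ~ inj_le K {b : K | lt b a};
  rc_regular : forall X : K -> Prop,
      (forall a : K, exists x, X x /\ ~ lt x a) -> inj_le K {x : K | X x} }.

Definition le_kappa (K : Type) (I : Type) : Prop := inj_le I K.

(* |I| <= kappa^+ : I carries a well-order all of whose proper initial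
   segments have size <= kappa (equivalently, I injects into kappa^+). *)
Definition le_kappa_plus (K : Type) (I : Type) : Prop :=
  exists R : I -> I -> Prop, strict_wellorder R /\
    forall i : I, inj_le {j : I | R j i} K.

Definition N_basic (K : Type) (X : K -> Prop) (eta : {x : K | X x} -> K)
  : (K -> K) -> Prop :=
  fun zeta => forall x : {x : K | X x}, zeta (proj1_sig x) = eta x.

(* (kappa, lambda)-Borel subsets of kappa^kappa; "small I" means |I| <= lambda.
   The class is closed under extensional equality of sets. *)
Inductive borel (K : Type) (small : Type -> Prop) : ((K -> K) -> Prop) -> Prop :=
| borel_empty : borel small (fun _ => False)
| borel_basic : forall (X : K -> Prop) (eta : {x : K | X x} -> K),
    ~ inj_le K {x : K | X x} ->
    borel small (@N_basic K X eta)
| borel_compl : forall A, borel small A -> borel small (fun z => ~ A z)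
| borel_union : forall (I : Type) (F : I -> (K -> K) -> Prop),
    small I -> (forall i, borel small (F i)) ->
    borel small (fun z => exists i, F i z)
| borel_inter : forall (I : Type) (F : I -> (K -> K) -> Prop),
    small I -> (forall i, borel small (F i)) ->
    borel small (fun z => forall i, F i z)
| borel_ext : forall A B, borel small A -> (forall z, A z <-> B z) ->
    borel small B.

Arguments borel K small _ : clear implicits.

(* Main.v *)
Require Import Defs.
From Stdlib Require Import Classical ClassicalEpsilon FunctionalExtensionality PropExtensionality ProofIrrelevance Wellfounded.

Lemma mychoice {A B : Type} (R : A -> B -> Prop) :
  (forall a, exists b, R a b) -> exists f : A -> B, forall a, R a (f a).
Proof.
  intros H. exists (fun a => proj1_sig (constructive_indefinite_description _ (H a))).
  intro a. exact (proj2_sig (constructive_indefinite_description _ (H a))).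
Qed.

Lemma sig_ext {T : Type} {P : T -> Prop} (x y : {t | P t}) :
  proj1_sig x = proj1_sig y -> x = y.
Proof. destruct x, y; simpl; intros ->. f_equal; apply proof_irrelevance. Qed.

Lemma wf_lex {A B : Type} (RA : A -> A -> Prop) (RB : B -> B -> Prop) :
  well_founded RA -> well_founded RB ->
  well_founded (fun p q : A * B => RA (fst p) (fst q) \/ (fst p = fst q /\ RB (snd p) (snd q))).
Proof.
  intros wa wb [a b]. revert b. induction (wa a) as [a _ IHa]. intro b.
  induction (wb b) as [b _ IHb]. constructor. intros [a' b'] [H | [H1 H2]]; simpl in *.
  - apply IHa; auto.
  - subst a'. apply IHb; auto.
Qed.

Section S.
Variable K : Type.
Variable lt : K -> K -> Prop.
Hypothesis hK : regular_cardinal lt.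

Definition small (T : Type) := ~ inj_le K T.

Lemma lt_wf : well_founded lt. Proof. exact (swo_wf (rc_wo hK)). Qed.
Lemma lt_irr : forall x, ~ lt x x. Proof. exact (swo_irrefl (rc_wo hK)). Qed.
Lemma lt_trans : forall x y z, lt x y -> lt y z -> lt x z. Proof. exact (swo_trans (rc_wo hK)). Qed.
Lemma lt_total : forall x y, lt x y \/ x = y \/ lt y x. Proof. exact (swo_total (rc_wo hK)). Qed.

Definition e : nat -> K := proj1_sig (constructive_indefinite_description _ (rc_infinite hK)).
Lemma e_inj : forall n m, e n = e m -> n = m.
Proof. exact (proj2_sig (constructive_indefinite_description _ (rc_infinite hK))). Qed.
Definition k0 := e 0.
Definition inhK : inhabited K := inhabits k0.

Lemma bounded (X : K -> Prop) : small {x | X x} -> exists a, forall x, X x -> lt x a.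
Proof.
  intros Hs. apply NNPP; intro Hn. apply Hs. apply (rc_regular hK). intro a.
  apply NNPP; intro H2. apply Hn. exists a. intros x Hx. apply NNPP; intro H3. apply H2.
  exists x; auto.
Qed.

Lemma small_single (T : Type) (t0 : T) : small {t | t = t0}.
Proof.
  intros [f Hf]. assert (e 0 = e 1).
  { apply Hf. apply sig_ext. destruct (f (e 0)), (f (e 1)); simpl; congruence. }
  apply e_inj in H. discriminate.
Qed.

Lemma small_sub (T : Type) (P Q : T -> Prop) : (forall t, P t -> Q t) ->
  small {t | Q t} -> small {t | P t}.
Proof.
  intros HPQ HQ [f Hf]. apply HQ.
  exists (fun k => exist Q (proj1_sig (f k)) (HPQ _ (proj2_sig (f k)))).
  intros x y H. apply Hf. apply sig_ext. injection H; auto.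
Qed.

Lemma small_union (T J : Type) (S : J -> T -> Prop) : small J ->
  (forall j, small {t | S j t}) -> small {t | exists j, S j t}.
Proof.
  intros HJ HS [g Hg].
  destruct (mychoice (fun k j => S j (proj1_sig (g k))) (fun k => proj2_sig (g k))) as [jf Hjf].
  assert (Hb : forall j, exists m, forall k, jf k = j -> lt k m).
  { intro j. apply bounded. intros [f Hf]. apply (HS j).
    exists (fun k => exist (S j) (proj1_sig (g (proj1_sig (f k))))
      (eq_ind _ (fun j' => S j' _) (Hjf (proj1_sig (f k))) j (proj2_sig (f k)))).
    intros x y H. apply Hf. apply sig_ext. apply Hg. apply sig_ext. injection H; auto. }
  destruct (mychoice _ Hb) as [mf Hmf].
  destruct (bounded (fun m => exists j, mf j = m)) as [M HM].
  { intros [h Hh]. destruct (mychoice (fun k j => mf j = proj1_sig (h k)) (fun k => proj2_sig (h k))) as [jj Hjj].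
    apply HJ. exists jj. intros x y H. apply Hh. apply sig_ext. rewrite <- Hjj, <- Hjj. congruence. }
  apply (lt_irr M). apply lt_trans with (mf (jf M)).
  - apply Hmf; auto.
  - apply HM; eauto.
Qed.

Lemma small_image (T U : Type) (P : T -> Prop) (f : T -> U) :
  small {t | P t} -> small {u | exists t, P t /\ f t = u}.
Proof.
  intros H. apply small_sub with (Q := fun u => exists j : {t | P t}, u = f (proj1_sig j)).
  - intros u [t [Ht <-]]. exists (exist _ t Ht). reflexivity.
  - apply small_union; auto. intro j. apply small_single.
Qed.

Lemma small_bool : small bool.
Proof.
  intros [f Hf].
  assert (H : forall n m, n <> m -> f (e n) <> f (e m)).
  { intros n m Hnm H. apply Hnm, e_inj, Hf, H. }
  destruct (f (e 0)) eqn:E0, (f (e 1)) eqn:E1; try (apply (H 0 1); congruence);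
  destruct (f (e 2)) eqn:E2; try (apply (H 0 2); congruence); apply (H 1 2); congruence.
Qed.

Definition kle (a b : K) := lt a b \/ a = b.

Lemma small_le (m : K) : small {x | kle x m}.
Proof.
  apply small_sub with (Q := fun x => exists b : bool, if b then lt x m else x = m).
  - intros x [H|H]; [exists true|exists false]; auto.
  - apply small_union; [apply small_bool|]. intros [|].
    + intros [f Hf]. apply ((rc_initial hK) m). exists f. exact Hf.
    + apply small_single.
Qed.

Lemma small_prod (P Q : K -> Prop) : small {a | P a} -> small {b | Q b} ->
  small {p : K * K | P (fst p) /\ Q (snd p)}.
Proof.
  intros HP HQ.
  apply small_sub with (Q := fun p => exists j : {a | P a}, fst p = proj1_sig j /\ Q (snd p)).
  - intros [a b] [Ha Hb]. exists (exist _ a Ha). auto.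
  - apply small_union; auto. intros j [f Hf]. apply HQ.
    exists (fun k => exist Q (snd (proj1_sig (f k))) (proj2 (proj2_sig (f k)))).
    intros x y H. apply Hf. apply sig_ext. injection H; intro H'.
    destruct (f x) as [[a b] [Ha Hb]], (f y) as [[a' b'] [Ha' Hb']]; simpl in *; congruence.
Qed.

Definition mx (a b : K) : K := if excluded_middle_informative (lt a b) then b else a.
Lemma mx_l a b : kle a (mx a b).
Proof. unfold mx, kle. destruct excluded_middle_informative; auto. Qed.
Lemma mx_r a b : kle b (mx a b).
Proof.
  unfold mx, kle. destruct excluded_middle_informative; auto.
  destruct (lt_total a b) as [H|[H|H]]; auto. contradiction.
Qed.
Lemma kle_trans a b c : kle a b -> kle b c -> kle a c.
Proof. unfold kle; intros [H|H] [H'|H']; subst; eauto using lt_trans. Qed.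

Definition G (p q : K * K) : Prop :=
  lt (mx (fst p) (snd p)) (mx (fst q) (snd q)) \/
  (mx (fst p) (snd p) = mx (fst q) (snd q) /\
   (lt (fst p) (fst q) \/ (fst p = fst q /\ lt (snd p) (snd q)))).

Lemma G_wf : well_founded G.
Proof.
  pose proof (wf_inverse_image _ _ _ (fun p : K * K => (mx (fst p) (snd p), p))
     (wf_lex _ _ lt_wf (wf_lex _ _ lt_wf lt_wf))) as W.
  eapply wf_incl; [|exact W].
  intros p q H. simpl. exact H.
Qed.

Lemma G_total p q : G p q \/ p = q \/ G q p.
Proof.
  destruct p as [a b], q as [c d]. unfold G; simpl.
  destruct (lt_total (mx a b) (mx c d)) as [H|[H|H]]; auto.
  destruct (lt_total a c) as [H1|[H1|H1]].
  - left; right; auto.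
  - subst c. destruct (lt_total b d) as [H2|[H2|H2]].
    + left; right; auto.
    + subst; auto.
    + right; right; right; split; auto.
  - right; right; right; split; auto.
Qed.

Lemma G_seg_small q : small {p | G p q}.
Proof.
  set (m := mx (fst q) (snd q)).
  apply small_sub with (Q := fun p : K * K => kle (fst p) m /\ kle (snd p) m).
  - intros p Hp. assert (kle (mx (fst p) (snd p)) m).
    { destruct Hp as [H|[H _]]; [left|right]; auto. }
    split; eapply kle_trans; [apply mx_l| exact H | apply mx_r | exact H].
  - apply (small_prod (fun a => kle a m) (fun b => kle b m)); apply small_le.
Qed.

Definition pstep (w : K * K) (rec : forall y, G y w -> K) : K :=
  epsilon inhK (fun k => forall y (H : G y w), lt (rec y H) k).

Definition pr0 : K * K -> K := Fix G_wf (fun _ => K) pstep.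

Lemma pr0_spec w : forall y, G y w -> lt (pr0 y) (pr0 w).
Proof.
  unfold pr0. rewrite Fix_eq.
  - unfold pstep at 1. apply (epsilon_spec inhK (fun k => forall y (H : G y w), lt (Fix G_wf (fun _ => K) pstep y) k)).
    destruct (bounded (fun m => exists y, G y w /\ Fix G_wf (fun _ => K) pstep y = m)) as [M HM].
    + apply small_image. apply G_seg_small.
    + exists M. intros y H. apply HM. eauto.
  - intros x f g Hfg. unfold pstep. f_equal.
    assert (f = g) as ->; auto.
    apply functional_extensionality_dep; intro y. apply functional_extensionality_dep; intro p. auto.
Qed.

Lemma pr0_inj p q : pr0 p = pr0 q -> p = q.
Proof.
  intros H. destruct (G_total p q) as [H1|[H1|H1]]; auto.
  - apply pr0_spec in H1. rewrite H in H1. destruct (lt_irr _ H1).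
  - apply pr0_spec in H1. rewrite H in H1. destruct (lt_irr _ H1).
Qed.

Definition pr (a b : K) := pr0 (a, b).
Lemma pr_inj a b c d : pr a b = pr c d -> a = c /\ b = d.
Proof. intros H. apply pr0_inj in H. injection H; auto. Qed.


Inductive code : Type :=
| Emp : code
| Atom : K -> K -> code
| Node : bool -> (K -> code) -> code.

Fixpoint den (c : code) (x : K -> K) : Prop :=
  match c with
  | Emp => False
  | Atom j k => x j = k
  | Node b f => if b then ~ (exists i, den (f i) x) else exists i, den (f i) x
  end.

Definition ctag := pr (e 0) (e 0).
Definition ca := pr (e 0) (e 1).
Definition cb := pr (e 0) (e 2).
Definition ch (i j : K) := pr (e 1) (pr i j).
Definition tb (b : bool) := if b then e 3 else e 2.

Fixpoint Rel (y : K -> K) (c : code) : Prop :=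
  match c with
  | Emp => y ctag = e 0
  | Atom j k => y ctag = e 1 /\ y ca = j /\ y cb = k
  | Node b f => y ctag = tb b /\ forall i, Rel (fun z => y (ch i z)) (f i)
  end.

Lemma e_neq n m : n <> m -> e n <> e m.
Proof. intros H H'. apply H, e_inj, H'. Qed.

Ltac tagc := match goal with
  | H1 : ?y ctag = e ?n, H2 : ?y ctag = e ?m |- _ =>
      let E := fresh in assert (E : e n = e m) by congruence;
      apply e_inj in E; discriminate E
  end.

Lemma Rel_fun c : forall y c', Rel y c -> Rel y c' -> c = c'.
Proof.
  induction c as [|j k|b f IH]; intros y [|j' k'|b' f'] H1 H2; simpl in *;
    repeat match goal with H : _ /\ _ |- _ => destruct H end;
    unfold tb in *; repeat match goal with b : bool |- _ => destruct b end;
    try tagc; try congruence.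
  - f_equal. apply functional_extensionality; intro i. eapply IH; eauto.
  - f_equal. apply functional_extensionality; intro i. eapply IH; eauto.
Qed.

Definition inv {A B : Type} (f : A -> B) (z : B) : option A :=
  match excluded_middle_informative (exists a, f a = z) with
  | left H => Some (proj1_sig (constructive_indefinite_description _ H))
  | right _ => None
  end.

Lemma inv_some {A B : Type} (f : A -> B) a : (forall x y, f x = f y -> x = y) -> inv f (f a) = Some a.
Proof.
  intros Hf. unfold inv. destruct excluded_middle_informative as [H|H].
  - f_equal. apply Hf. exact (proj2_sig (constructive_indefinite_description _ H)).
  - exfalso; eauto.
Qed.

Lemma inv_none {A B : Type} (f : A -> B) z : (forall a, f a <> z) -> inv f z = None.
Proof.
  intros Hf. unfold inv. destruct excluded_middle_informative as [H|H]; auto.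
  destruct H as [a Ha]. destruct (Hf a Ha).
Qed.

Definition chp (p : K * K) := ch (fst p) (snd p).
Lemma chp_inj : forall p q, chp p = chp q -> p = q.
Proof.
  intros [a b] [c d] H. unfold chp, ch in H; simpl in H.
  apply pr_inj in H as [_ H]. apply pr_inj in H as [-> ->]. reflexivity.
Qed.
Lemma ctag_not_ch : forall p, chp p <> ctag.
Proof.
  intros [a b] H. unfold chp, ch, ctag in H. apply pr_inj in H as [H _].
  apply e_inj in H. discriminate.
Qed.
Lemma ca_ctag : ca <> ctag.
Proof. unfold ca, ctag. intro H. apply pr_inj in H as [_ H]. apply e_inj in H. discriminate. Qed.
Lemma cb_ctag : cb <> ctag.
Proof. unfold cb, ctag. intro H. apply pr_inj in H as [_ H]. apply e_inj in H. discriminate. Qed.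
Lemma cb_ca : cb <> ca.
Proof. unfold cb, ca. intro H. apply pr_inj in H as [_ H]. apply e_inj in H. discriminate. Qed.

Definition ifeq {T : Type} (z w : K) (a b : T) : T :=
  if excluded_middle_informative (z = w) then a else b.
Lemma ifeq_t {T} z (a b : T) : ifeq z z a b = a.
Proof. unfold ifeq; destruct excluded_middle_informative; congruence. Qed.
Lemma ifeq_f {T} z w (a b : T) : z <> w -> ifeq z w a b = b.
Proof. unfold ifeq; destruct excluded_middle_informative; congruence. Qed.

Lemma Rel_ex c : exists y, Rel y c.
Proof.
  induction c as [|j k|b f IH].
  - exists (fun _ => e 0). reflexivity.
  - exists (fun z => ifeq z ctag (e 1) (ifeq z ca j (ifeq z cb k k0))). simpl.
    rewrite ifeq_t, ifeq_f, ifeq_t, ifeq_f, ifeq_f, ifeq_t; auto using ca_ctag, cb_ctag, cb_ca.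
  - destruct (mychoice _ IH) as [yf Hyf].
    exists (fun z => match inv chp z with Some p => yf (fst p) (snd p) | None => ifeq z ctag (tb b) k0 end).
    simpl. split.
    + rewrite inv_none by (intros p; apply ctag_not_ch). apply ifeq_t.
    + intro i. assert (E : (fun z => match inv chp (ch i z) with Some p => yf (fst p) (snd p)
               | None => ifeq (ch i z) ctag (tb b) k0 end) = yf i).
      { apply functional_extensionality; intro z. change (ch i z) with (chp (i, z)).
        rewrite inv_some by apply chp_inj. reflexivity. }
      rewrite E. apply Hyf.
Qed.

Definition Bk := borel K (le_kappa K).

Lemma lek_K : le_kappa K K.
Proof. exists (fun x => x). auto. Qed.
Lemma lek_bool : le_kappa K bool.
Proof.
  exists (fun b : bool => if b then e 1 else e 0). intros [|] [|] H; auto;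
  apply e_inj in H; discriminate.
Qed.

Lemma B_ext A B : Bk A -> (forall z, A z <-> B z) -> Bk B.
Proof. intros; eapply borel_ext; eauto. Qed.
Lemma B_empty : Bk (fun _ => False).
Proof. apply borel_empty. Qed.
Lemma B_compl A : Bk A -> Bk (fun z => ~ A z).
Proof. apply borel_compl. Qed.
Lemma B_unionK (F : K -> (K -> K) -> Prop) : (forall i, Bk (F i)) -> Bk (fun z => exists i, F i z).
Proof. intros; apply borel_union; auto; apply lek_K. Qed.
Lemma B_interK (F : K -> (K -> K) -> Prop) : (forall i, Bk (F i)) -> Bk (fun z => forall i, F i z).
Proof. intros; apply borel_inter; auto; apply lek_K. Qed.
Lemma B_or A B : Bk A -> Bk B -> Bk (fun z => A z \/ B z).
Proof.
  intros HA HB. eapply B_ext.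
  - apply (borel_union (fun (b : bool) => if b then A else B)); [apply lek_bool|intros [|]; auto].
  - intro z; split; [intros [[|] H]; auto|intros [H|H]; [exists true|exists false]; auto].
Qed.
Lemma B_and A B : Bk A -> Bk B -> Bk (fun z => A z /\ B z).
Proof.
  intros HA HB. eapply B_ext.
  - apply (borel_inter (fun (b : bool) => if b then A else B)); [apply lek_bool|intros [|]; auto].
  - intro z; split; [intros H; split; [apply (H true)|apply (H false)]|intros [H1 H2] [|]; auto].
Qed.
Lemma B_full : Bk (fun _ => True).
Proof. eapply B_ext; [apply B_compl, B_empty|]. intro; tauto. Qed.
Lemma B_const (P : Prop) A : Bk A -> Bk (fun z => P /\ A z).
Proof.
  intros HA. destruct (classic P) as [H|H].
  - eapply B_ext; [exact HA|]. intro; tauto.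
  - eapply B_ext; [exact B_empty|]. intro; tauto.
Qed.
Lemma B_atom y k : Bk (fun x => x y = k).
Proof.
  eapply B_ext.
  - apply (@borel_basic K (le_kappa K) (fun z => z = y) (fun _ => k)). apply small_single.
  - intro x. unfold N_basic. split.
    + intros H. apply (H (exist _ y eq_refl)).
    + intros H [z Hz]; simpl; subst; auto.
Qed.
Lemma B_iffs A (s : bool) : Bk A -> Bk (fun x => A x <-> s = true).
Proof.
  intros HA. destruct s.
  - eapply B_ext; [exact HA|]. intro; intuition.
  - eapply B_ext; [exact (B_compl _ HA)|]. intro; intuition discriminate.
Qed.
Lemma B_exb (F : bool -> (K -> K) -> Prop) : (forall b, Bk (F b)) -> Bk (fun z => exists b, F b z).
Proof.
  intros H. eapply B_ext; [apply (B_or _ _ (H true) (H false))|].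
  intro z; split; [intros [H'|H']; eauto|intros [[|] H']; auto].
Qed.

Lemma mono_borel (s1 s2 : Type -> Prop) A : (forall I, s1 I -> s2 I) ->
  borel K s1 A -> borel K s2 A.
Proof.
  intros Hs H. induction H.
  - apply borel_empty.
  - apply borel_basic; auto.
  - apply borel_compl; auto.
  - apply borel_union; auto.
  - apply borel_inter; auto.
  - eapply borel_ext; eauto.
Qed.

Definition Full := Node true (fun _ => Emp).
Lemma den_Full x : den Full x.
Proof. simpl. intros [_ []]. Qed.
Definition Inter (f : K -> code) := Node true (fun i => Node true (fun _ => f i)).
Lemma den_Inter f x : den (Inter f) x <-> forall i, den (f i) x.
Proof.
  simpl. split.
  - intros H i. apply NNPP; intro H'. apply H. exists i. intros [_ H2]. auto.
  - intros H [i Hi]. apply Hi. exists k0. auto.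
Qed.

Lemma borel_code A : Bk A -> exists c, forall z, A z <-> den c z.
Proof.
  unfold Bk. induction 1 as [|X eta HX|A HA IH|I F HI HF IH|I F HI HF IH|A B HA IH HAB].
  - exists Emp. simpl. tauto.
  - exists (Inter (fun k => match excluded_middle_informative (X k) with
                            | left H => Atom k (eta (exist X k H)) | right _ => Full end)).
    intro z. rewrite den_Inter. unfold N_basic. split.
    + intros H k. destruct excluded_middle_informative as [Hk|Hk]; simpl.
      * apply (H (exist X k Hk)).
      * apply (den_Full z).
    + intros H [k Hk]. specialize (H k). simpl.
      destruct excluded_middle_informative as [Hk'|Hk']; [|contradiction].
      simpl in H. rewrite H. f_equal. apply sig_ext. reflexivity.
  - destruct IH as [c Hc]. exists (Node true (fun _ => c)). intro z. simpl. rewrite Hc.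
    split; [intros H [_ H']; auto|intros H H'; apply H; exists k0; auto].
  - destruct (mychoice _ IH) as [cf Hcf]. destruct HI as [g Hg].
    exists (Node false (fun k => match inv g k with Some i => cf i | None => Emp end)).
    intro z. simpl. split.
    + intros [i Hi]. exists (g i). rewrite inv_some by auto. apply Hcf; auto.
    + intros [k Hk]. destruct (inv g k) as [i|]; [|destruct Hk]. exists i. apply Hcf; auto.
  - destruct (mychoice _ IH) as [cf Hcf]. destruct HI as [g Hg].
    exists (Inter (fun k => match inv g k with Some i => cf i | None => Full end)).
    intro z. rewrite den_Inter. split.
    + intros H k. destruct (inv g k) as [i|]; [apply Hcf; auto|apply (den_Full z)].
    + intros H i. specialize (H (g i)). rewrite inv_some in H by auto. apply Hcf; auto.
  - destruct IH as [c Hc]. exists c. intro z. rewrite <- HAB. auto.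
Qed.


Fixpoint rle (c d : code) : Prop :=
  match c with
  | Node _ f => match d with Node _ g => forall i, exists j, rle (f i) (g j) | _ => False end
  | _ => True
  end.
Definition rlt (c d : code) : Prop :=
  match d with Node _ g => exists j, rle c (g j) | _ => False end.

Lemma rle_refl c : rle c c.
Proof. induction c; simpl; eauto. Qed.

Lemma rle_trans a : forall b c, rle a b -> rle b c -> rle a c.
Proof.
  induction a as [| | ba f IH]; intros b c H1 H2; simpl; auto.
  destruct b as [| |bb g]; simpl in H1; try contradiction.
  destruct c as [| |bc h]; simpl in H2; try contradiction.
  intro i. destruct (H1 i) as [j Hj]. destruct (H2 j) as [k Hk]. exists k. eauto.
Qed.

Lemma rlt_rle c : forall d, rlt c d -> rle c d.
Proof.
  induction c as [| |bc f IH]; intros d H; simpl; auto.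
  destruct d as [| |bd g]; simpl in H; try contradiction.
  destruct H as [j Hj]. intro i. exists j. apply IH.
  destruct (g j) as [| |bg g'] eqn:E; simpl in Hj; try contradiction.
  simpl. apply Hj.
Qed.

Lemma rle_rlt_trans a b c : rle a b -> rlt b c -> rlt a c.
Proof.
  intros H1 H2. destruct c as [| |bc h]; simpl in *; try contradiction.
  destruct H2 as [j Hj]. exists j. eapply rle_trans; eauto.
Qed.

Lemma rlt_rle_trans a b c : rlt a b -> rle b c -> rlt a c.
Proof.
  intros H1 H2. destruct b as [| |bb g]; simpl in H1; try contradiction.
  destruct c as [| |bc h]; simpl in H2; try contradiction.
  destruct H1 as [j Hj]. destruct (H2 j) as [k Hk]. exists k. simpl. eapply rle_trans; eauto.
Qed.

Lemma rle_Acc d : forall c, rle c d -> Acc rlt c.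
Proof.
  induction d as [| |bd g IH]; intros c H; constructor; intros c' H';
    destruct c as [| |bc f]; simpl in *; try contradiction.
  destruct H' as [j Hj]. destruct (H j) as [k Hk]. apply (IH k). eapply rle_trans; eauto.
Qed.

Lemma rlt_wf : well_founded rlt.
Proof. intro c. apply (rle_Acc c), rle_refl. Qed.

Lemma rlt_irr c : ~ rlt c c.
Proof.
  intro H. assert (A := rlt_wf c). induction A as [c _ IH]. apply (IH c H H).
Qed.

Lemma rle_total c : forall d, rle c d \/ rlt d c.
Proof.
  induction c as [| |bc f IH]; intros d; [left; exact I|left; exact I|].
  destruct (classic (rle (Node bc f) d)) as [H|H]; [left; exact H|right].
  destruct d as [| |bd g].
  - exists k0. exact I.
  - exists k0. exact I.
  - simpl in H. apply not_all_ex_not in H as [i Hi].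
    exists i. destruct (f i) as [| |bf f'] eqn:E.
    + exfalso. apply Hi. exists k0. exact I.
    + exfalso. apply Hi. exists k0. exact I.
    + simpl. intro j. destruct (IH i (g j)) as [H1|H1].
      * exfalso. apply Hi. exists j. rewrite E in H1. exact H1.
      * rewrite E in H1. simpl in H1. exact H1.
Qed.

Definition cls (c : code) : code -> Prop := fun d => rle d c /\ rle c d.
Definition Ity := {P : code -> Prop | exists c, P = cls c}.

Lemma cls_eq c d : rle c d -> rle d c -> cls c = cls d.
Proof.
  intros H1 H2. apply functional_extensionality; intro x. apply propositional_extensionality.
  unfold cls; split; intros [H3 H4]; split; eapply rle_trans; eauto.
Qed.
Lemma cls_inv c d : cls c = cls d -> rle c d /\ rle d c.
Proof.
  intros H. assert (cls c c) by (split; apply rle_refl). rewrite H in H0.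
  destruct H0; auto.
Qed.

Definition RI (P Q : Ity) : Prop :=
  exists c d, proj1_sig P = cls c /\ proj1_sig Q = cls d /\ rlt c d.

Lemma RI_wo : strict_wellorder RI.
Proof.
  constructor.
  - intros [P [c0 Hc0]].
    assert (H : forall c, Acc rlt c -> forall P1 : Ity, proj1_sig P1 = cls c -> Acc RI P1).
    { intros c A. induction A as [c _ IH]. intros P1 HP. constructor.
      intros Q [c1 [d1 [HQ [HP' Hlt]]]]. rewrite HP in HP'. apply cls_inv in HP' as [H1 H2].
      apply (IH c1); auto. eapply rlt_rle_trans; eauto. }
    apply (H c0 (rlt_wf c0)). auto.
  - intros P [c [d [H1 [H2 H3]]]]. rewrite H1 in H2. apply cls_inv in H2 as [H4 H5].
    apply (rlt_irr c). eapply rlt_rle_trans; eauto.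
  - intros P Q R [a [b [H1 [H2 H3]]]] [b' [c [H4 [H5 H6]]]].
    rewrite H2 in H4. apply cls_inv in H4 as [H7 H8].
    exists a, c. repeat split; auto.
    eapply rle_rlt_trans; [|exact H6]. eapply rle_trans; [apply rlt_rle; exact H3|exact H7].
  - intros [P [c Hc]] [Q [d Hd]].
    destruct (rle_total c d) as [H1|H1].
    + destruct (rle_total d c) as [H2|H2].
      * right; left. apply sig_ext; simpl. rewrite Hc, Hd. apply cls_eq; auto.
      * left. exists c, d; simpl; auto.
    + right; right. exists d, c; simpl; auto.
Qed.

Definition inj_on {T : Type} (S : T -> Prop) :=
  exists phi : T -> K, forall t t', S t -> S t' -> phi t = phi t' -> t = t'.

Lemma inj_on_le {T : Type} (S : T -> Prop) : inj_on S -> inj_le {t | S t} K.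
Proof.
  intros [phi H]. exists (fun x => phi (proj1_sig x)). intros x y E.
  apply sig_ext. apply H; auto; [apply (proj2_sig x)|apply (proj2_sig y)].
Qed.

Lemma inj_on_sub {T : Type} (S S' : T -> Prop) : (forall t, S t -> S' t) -> inj_on S' -> inj_on S.
Proof. intros H [phi Hp]. exists phi. auto. Qed.

Lemma inj_on_union {T J : Type} (S : J -> T -> Prop) : inj_le J K ->
  (forall j, inj_on (S j)) -> inj_on (fun t => exists j, S j t).
Proof.
  intros [psi Hpsi] HS. destruct (mychoice _ HS) as [Phi HPhi].
  exists (fun t => match excluded_middle_informative (exists j, S j t) with
         | left H => let j := proj1_sig (constructive_indefinite_description _ H) in
                     pr (psi j) (Phi j t)
         | right _ => k0 end).
  intros t t' Ht Ht' E.
  destruct excluded_middle_informative as [H|H]; [|contradiction].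
  destruct excluded_middle_informative as [H'|H']; [|contradiction].
  destruct (constructive_indefinite_description _ H) as [j Hj].
  destruct (constructive_indefinite_description _ H') as [j' Hj']. simpl in E.
  apply pr_inj in E as [E1 E2]. apply Hpsi in E1. subst j'.
  eapply HPhi; eauto.
Qed.

Lemma inj_le_optionK : inj_le (option K) K.
Proof.
  exists (fun o => match o with Some j => pr (e 1) j | None => pr (e 0) (e 0) end).
  intros [x|] [y|] H; auto.
  - apply pr_inj in H as [_ ->]; auto.
  - apply pr_inj in H as [H _]. apply e_inj in H. discriminate.
  - apply pr_inj in H as [H _]. apply e_inj in H. discriminate.
Qed.

Lemma below_inj d : inj_on (fun Q : Ity => exists c, proj1_sig Q = cls c /\ rle c d).
Proof.
  induction d as [| |bd g IH].
  - exists (fun _ => k0). intros [Q HQ] [Q' HQ'] [c [H1 H2]] [c' [H3 H4]] _.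
    apply sig_ext; simpl in *. rewrite H1, H3. apply cls_eq;
    destruct c as [| |? ?]; destruct c'; simpl in *; auto; contradiction.
  - exists (fun _ => k0). intros [Q HQ] [Q' HQ'] [c [H1 H2]] [c' [H3 H4]] _.
    apply sig_ext; simpl in *. rewrite H1, H3. apply cls_eq;
    destruct c as [| |? ?]; destruct c'; simpl in *; auto; contradiction.
  - apply inj_on_sub with (S' := fun Q => exists o : option K,
        match o with
        | None => proj1_sig Q = cls (Node bd g)
        | Some j => exists c, proj1_sig Q = cls c /\ rle c (g j) end).
    + intros Q [c [H1 H2]]. destruct (rle_total (Node bd g) c) as [H3|H3].
      * exists None. rewrite H1. apply cls_eq; auto.
      * destruct H3 as [j Hj]. exists (Some j). eauto.
    + apply inj_on_union; [apply inj_le_optionK|]. intros [j|]; auto.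
      exists (fun _ => k0). intros Q Q' H1 H2 _. apply sig_ext. congruence.
Qed.

Lemma lekp_Ity : le_kappa_plus K Ity.
Proof.
  exists RI. split; [apply RI_wo|]. intros [P [d Hd]].
  apply inj_on_le. apply inj_on_sub with (S' := fun Q : Ity => exists c, proj1_sig Q = cls c /\ rle c d);
    [|apply below_inj].
  intros Q [c [d' [H1 [H2 H3]]]]. simpl in H2. rewrite Hd in H2. apply cls_inv in H2 as [H4 H5].
  exists c. split; auto. apply rlt_rle. eapply rlt_rle_trans; eauto.
Qed.


Definition Sset (d : code) (h : K -> K) (s : bool) (x : K -> K) : Prop :=
  exists c, rle c d /\ Rel (fun z => x (h z)) c /\ (den c x <-> s = true).

Definition AC (h : K -> K) (x : K -> K) := x (x (h ca)) = x (h cb).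

Definition UU (g : K -> code) (h : K -> K) (x : K -> K) :=
  exists i j, Sset (g j) (fun z => h (ch i z)) true x.

Definition NodeCond (d : code) (h : K -> K) (x : K -> K) (b : bool) (s : bool) : Prop :=
  match d with
  | Node _ g => (forall i, exists j, exists s', Sset (g j) (fun z => h (ch i z)) s' x) /\
                ((if b then ~ UU g h x else UU g h x) <-> s = true)
  | _ => False
  end.

Lemma UU_iff g h x f : (forall i, Rel (fun z => x (h (ch i z))) (f i)) ->
  (forall i, exists j, rle (f i) (g j)) -> (UU g h x <-> exists i, den (f i) x).
Proof.
  intros HR Hle. split.
  - intros [i [j [c [_ [Hc Hd]]]]]. exists i. rewrite (Rel_fun _ _ _ (HR i) Hc). apply Hd; auto.
  - intros [i Hi]. destruct (Hle i) as [j Hj]. exists i, j, (f i). repeat split; auto.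
Qed.

Lemma tb_ne0 b : tb b <> e 0. Proof. destruct b; apply e_neq; discriminate. Qed.
Lemma tb_ne1 b : tb b <> e 1. Proof. destruct b; apply e_neq; discriminate. Qed.
Lemma tb_inj b b' : tb b = tb b' -> b = b'.
Proof. destruct b, b'; simpl; auto; intro H; apply e_inj in H; discriminate. Qed.

Lemma Sset_char d h s x : Sset d h s x <->
  (s = false /\ x (h ctag) = e 0) \/ (x (h ctag) = e 1 /\ (AC h x <-> s = true)) \/
  (exists b, x (h ctag) = tb b /\ NodeCond d h x b s).
Proof.
  split.
  - intros [c [Hle [HR Hd]]]. destruct c as [|j k|b f]; simpl in HR.
    + left. split; auto. destruct s; auto. exfalso; apply Hd; auto.
    + destruct HR as [H1 [H2 H3]]. right; left. split; auto. unfold AC. rewrite H2, H3. exact Hd.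
    + destruct HR as [H1 H2]. right; right. exists b. split; auto.
      destruct d as [| |bd g]; simpl in Hle; try contradiction. simpl. split.
      * intro i. destruct (Hle i) as [j Hj]. exists j.
        destruct (classic (den (f i) x)) as [Hc|Hc]; [exists true|exists false];
          exists (f i); (split; [exact Hj|split; [apply H2|]]); split; intro; auto;
          try discriminate; contradiction.
      * pose proof (UU_iff g h x f H2 Hle) as HU. simpl in Hd. destruct b; tauto.
  - intros [[H1 H2]|[[H1 H2]|[b [H1 H2]]]].
    + exists Emp. subst s. split; [exact I|]. split; [exact H2|]. simpl. split; [intros []|discriminate].
    + exists (Atom (x (h ca)) (x (h cb))). split; [exact I|]. split; [simpl; auto|exact H2].
    + destruct d as [| |bd g]; simpl in H2; try contradiction. destruct H2 as [HW HU].
      assert (HW' : forall i, exists c, (exists j, rle c (g j)) /\ Rel (fun z => x (h (ch i z))) c).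
      { intro i. destruct (HW i) as [j [s' [c [Hc1 [Hc2 _]]]]]. exists c. split; eauto. }
      destruct (mychoice _ HW') as [f Hf].
      exists (Node b f). split; [|split].
      * intro i. apply (proj1 (Hf i)).
      * split; auto. intro i. apply (proj2 (Hf i)).
      * pose proof (UU_iff g h x f (fun i => proj2 (Hf i)) (fun i => proj1 (Hf i))) as HU'.
        simpl. destruct b; tauto.
Qed.

Lemma B_AC h : Bk (AC h).
Proof.
  apply B_ext with (A := fun x => exists j k, x (h ca) = j /\ (x j = k /\ x (h cb) = k)).
  - apply B_unionK; intro j. apply B_unionK; intro k.
    apply (B_and (fun x => x (h ca) = j)); [apply B_atom|apply (B_and (fun x => x j = k)); apply B_atom].
  - intro x. unfold AC. split.
    + intros [j [k [H1 [H2 H3]]]]. rewrite H1, H2, H3. reflexivity.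
    + intros H. exists (x (h ca)), (x (h cb)). split; [reflexivity|split; [exact H|reflexivity]].
Qed.

Lemma Sset_borel d : forall h s, Bk (Sset d h s).
Proof.
  induction d as [| |bd g IH]; intros h s; (eapply B_ext; [|intro x; symmetry; apply Sset_char]);
  (apply B_or; [apply B_const, B_atom|apply B_or; [apply B_and; [apply B_atom|apply B_iffs, B_AC]|]]);
  apply B_exb; intro b.
  - eapply B_ext; [exact B_empty|]. simpl. intro; tauto.
  - eapply B_ext; [exact B_empty|]. simpl. intro; tauto.
  - simpl. apply B_and; [apply B_atom|]. apply B_and.
    + apply B_interK; intro i. apply B_unionK; intro j. apply B_exb; intro s'. apply IH.
    + apply B_iffs. assert (HU : Bk (UU g h)).
      { apply B_unionK; intro i. apply B_unionK; intro j. apply IH. }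
      destruct b; [apply B_compl|]; exact HU.
Qed.

End S.

Theorem corollary3p19 (K : Type) (lt : K -> K -> Prop)
  (hK : regular_cardinal lt) :
  exists A : (K -> K) -> Prop,
    borel K (le_kappa_plus K) A /\ ~ borel K (le_kappa K) A.
Proof.
  exists (fun x => exists c, Rel K lt hK x c /\ ~ den K c x). split.
  - eapply borel_ext.
    + apply (borel_union (fun (P : Ity K) x => exists d, proj1_sig P = cls K d /\ Sset K lt hK d (fun z => z) false x)).
      * apply (lekp_Ity K lt hK).
      * intros [P [d Hd]]. apply (mono_borel K (le_kappa K)).
        { intros I [f Hf]. exists (fun i j => lt (f i) (f j)). split.
          - constructor.
            + apply (wf_inverse_image _ _ _ f), (lt_wf K lt hK).
            + intro x. apply (lt_irr K lt hK).
            + intros x y z. apply (lt_trans K lt hK).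
            + intros x y. destruct (lt_total K lt hK (f x) (f y)) as [H|[H|H]]; auto.
          - intros i. exists (fun j => f (proj1_sig j)). intros x y H. apply sig_ext. auto. }
        eapply borel_ext; [apply (Sset_borel K lt hK d (fun z => z) false)|].
        intro x; simpl. split.
        -- intros H. exists d. auto.
        -- intros [d' [H1 [c [H2 H3]]]]. rewrite Hd in H1. apply cls_inv in H1 as [H4 H5].
           exists c. split; auto. eapply rle_trans; eauto.
    + intro x. split.
      * intros [[P HP] [d [H1 [c [H2 [H3 H4]]]]]]. exists c. split; auto.
        intro H5. apply H4 in H5. discriminate.
      * intros [c [H1 H2]]. exists (exist _ (cls K c) (ex_intro _ c eq_refl)). exists c.
        split; auto. exists c. split; [apply rle_refl|]. split; auto. split; [contradiction|discriminate].
  - intros HB. destruct (borel_code K lt hK _ HB) as [c Hc].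
    destruct (Rel_ex K lt hK c) as [y Hy].
    assert (E : (exists c', Rel K lt hK y c' /\ ~ den K c' y) <-> ~ den K c y).
    { split.
      - intros [c' [H1 H2]]. rewrite (Rel_fun K lt hK _ _ _ Hy H1). auto.
      - intros H. eauto. }
    rewrite Hc in E. tauto.
Qed.
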